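(* There exist absolute constants $0<c_1\le c_2$ and $c_3>0$ such that for every integer $N>20$ there is a weight $w\in A_1(\mathbb{R})$ satisfying: (1) $\int_0^1 w(x)\,dx=1$; (2) $c_1N\le [w]_{A_1}\le c_2N$; (3) $|\{x\in(1,\infty): w(x)>x\}|\ge c_3N^2$.
   Context: A weight $w\ge0$ on $\mathbb{R}$ is in $A_1$ if there is $C>0$ with $\frac1{|I|}\int_Iw\le C\operatorname{ess\,inf}_Iw$ for every interval $I$; $[w]_{A_1}$ is the smallest such $C$. $|E|$ is Lebesgue measure. *)

(* Defs.v *)
From HB Require Import structures.
From mathcomp Require Import all_boot all_order all_algebra.
From mathcomp Require Import all_classical all_reals all_analysis.
Set Implicit Arguments. Unset Strict Implicit. Unset Printing Implicit Defensive.
Import Order.TTheory GRing.Theory Num.Theory.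
Local Open Scope classical_set_scope.
Local Open Scope ring_scope.

Section A1.
Variable R : realType.
Local Notation mu := (@lebesgue_measure R).

Definition essinf_on (I : set R) (f : R -> \bar R) : \bar R :=
  ereal_sup [set y : \bar R | \forall x \ae mu, I x -> (y <= f x)%E].

Definition avg_on (a b : R) (w : R -> R) : \bar R :=
  ((b - a)^-1)%:E * \int[mu]_(x in `[a, b]) (w x)%:E.

Definition weight (w : R -> R) : Prop :=
  (forall x, 0 <= w x) /\ measurable_fun setT w /\
  (forall a b : R, mu.-integrable `[a, b] (EFin \o w)).

Definition A1_cond (w : R -> R) (C : R) : Prop :=
  forall a b : R, a < b ->
    (avg_on a b w <= C%:E * essinf_on `[a, b] (EFin \o w))%E.

Definition in_A1 (w : R -> R) : Prop := weight w /\ exists C, 0 < C /\ A1_cond w C.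

Definition A1_const (w : R -> R) : \bar R :=
  ereal_inf [set C%:E | C in [set C : R | A1_cond w C]].
End A1.

(* Main.v *)
Require Import Defs.
From HB Require Import structures.
From mathcomp Require Import all_boot all_order all_algebra.
From mathcomp Require Import all_classical all_reals all_analysis.
From mathcomp Require Import ring lra measurable_realfun.
Import Order.TTheory GRing.Theory Num.Theory.
Local Open Scope classical_set_scope.
Local Open Scope ring_scope.

Section S.
Variable R : realType.
Definition len (a b lo hi : R) : R :=
  if Num.max a lo < Num.min b hi then Num.min b hi - Num.max a lo else 0.
Ltac normh := repeat match goal with
  | H : is_true (~~ (?x <= ?y)) |- _ => rewrite -ltNge in H
  | H : is_true (~~ (?x < ?y)) |- _ => rewrite -leNgt in H
  end.
Ltac splitall := repeat match goal with
  | |- context[if ?c then _ else _] => case: (boolP c) => ?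
  end.
Ltac mmsplit := repeat match goal with
  | |- context[Num.max ?x ?y] => case: (leP x y) => ?
  | |- context[Num.min ?x ?y] => case: (leP x y) => ?
  end.
Ltac lenT := rewrite /len; mmsplit; splitall; intros; normh; lra.

Lemma len_ge0 a b lo hi : 0 <= len a b lo hi.
Proof. lenT. Qed.
Lemma len_le a b lo hi : a <= b -> len a b lo hi <= b - a.
Proof. move=> ?; lenT. Qed.
Lemma len_le2 a b lo hi : lo <= hi -> len a b lo hi <= hi - lo.
Proof. move=> ?; lenT. Qed.
Lemma len_in a b lo hi : lo <= a -> b <= hi -> a <= b -> len a b lo hi = b - a.
Proof. move=> ???; lenT. Qed.
Lemma len_mono a b lo hi lo' hi' : lo' <= lo -> hi <= hi' ->
  len a b lo hi <= len a b lo' hi'.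
Proof. move=> ??; lenT. Qed.
Lemma len_out a b lo hi lo' hi' d : (a < lo \/ hi < b) -> lo <= lo' -> lo' <= hi' -> hi' <= hi ->
  d <= lo' - lo -> d <= hi - hi' -> 0 < len a b lo' hi' -> d <= len a b lo hi.
Proof. case=> ?; lenT. Qed.
Lemma len_disj a b lo1 hi1 lo2 hi2 : a <= b -> lo1 <= hi1 -> hi1 <= lo2 -> lo2 <= hi2 ->
  len a b lo1 hi1 + len a b lo2 hi2 <= len a b lo1 hi2.
Proof. move=> ????; lenT. Qed.
Lemma len_out0 a b lo hi : (b <= lo \/ hi <= a) -> len a b lo hi = 0.
Proof. move=> [?|?]; lenT. Qed.

Lemma len_right (a b lo hi : R) : lo <= a -> a <= hi -> hi <= b -> len a b lo hi = hi - a.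
Proof. move=> ???; lenT. Qed.
Local Notation mu := (@lebesgue_measure R).
Definition ind (lo hi : R) : R -> R := \1_(`[lo, hi]).

Lemma setI_cc (a b lo hi : R) : `[lo, hi] `&` `[a, b] = [set` `[Num.max a lo, Num.min b hi]] :> set R.
Proof.
apply/seteqP; split=> x /=; rewrite !in_itv /= ?ge_max ?le_min.
- by case=> /andP[-> ->] /andP[-> ->].
- by case/andP=> /andP[-> ->] /andP[-> ->].
Qed.

Lemma int_ind a b lo hi : (\int[mu]_(x in `[a,b]) (ind lo hi x)%:E = (len a b lo hi)%:E)%E.
Proof.
rewrite /ind integral_indic//= setI_cc lebesgue_measure_itv /= /len lte_fin.
by case: ifP => // _; rewrite EFinB.
Qed.

Lemma mind lo hi : measurable_fun setT (ind lo hi).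
Proof. exact: measurable_indic. Qed.

Lemma ind01 lo hi x : 0 <= ind lo hi x <= 1.
Proof. by rewrite /ind indicE; case: (_ \in _); rewrite /= ?ler01 ?lexx. Qed.

Lemma ind_in lo hi x : lo <= x -> x <= hi -> ind lo hi x = 1.
Proof. by move=> h1 h2; rewrite /ind indicE mem_set //= in_itv /= h1 h2. Qed.

Lemma ind_out lo hi x : (x < lo \/ hi < x) -> ind lo hi x = 0.
Proof.
move=> h; rewrite /ind indicE memNset //= in_itv /= => /andP[h1 h2].
by case: h => h; lra.
Qed.

Definition rad (m : R) (L : nat) := m * 2 ^+ L.

Fixpoint spike (p m D : R) (L : nat) (x : R) : R :=
  match L with
  | 0 => (D - 1) * ind (p - rad m 0) (p + rad m 0) x
  | L'.+1 => ind (p - rad m L'.+1) (p + rad m L'.+1) x + 2 * spike p m D L' x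
  end.

Fixpoint Fsp (a b p m D : R) (L : nat) : R :=
  match L with
  | 0 => (D - 1) * len a b (p - rad m 0) (p + rad m 0)
  | L'.+1 => len a b (p - rad m L'.+1) (p + rad m L'.+1) + 2 * Fsp a b p m D L'
  end.

Lemma spike_ge0 p m D L x : 1 <= D -> 0 <= spike p m D L x.
Proof.
move=> D1; elim: L => [|L IH] /=; have := ind01; move=> h.
- by apply: mulr_ge0; [lra| case/andP: (h (p - rad m 0) (p + rad m 0) x)].
- case/andP: (h (p - rad m L.+1) (p + rad m L.+1) x) => ??; lra.
Qed.

Lemma mspike p m D L : measurable_fun setT (spike p m D L).
Proof.
elim: L => [|L IH] /=.
- by apply: measurable_funM => //; exact: mind.
- apply: measurable_funD; first exact: mind.
  by apply: measurable_funM.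
Qed.

Lemma int_spike a b p m D L : 1 <= D ->
  (\int[mu]_(x in `[a,b]) (spike p m D L x)%:E = (Fsp a b p m D L)%:E)%E.
Proof.
move=> D1; elim: L => [|L IH] /=.
- under eq_integral do rewrite EFinM.
  rewrite ge0_integralZl_EFin //; last by lra.
  + by rewrite int_ind.
  + by move=> x _; rewrite lee_fin; case/andP: (ind01 (p - rad m 0) (p + rad m 0) x).
  + by apply/measurable_EFinP; apply: measurable_funTS; exact: mind.
- under eq_integral do rewrite EFinD EFinM.
  rewrite ge0_integralD //.
  + rewrite ge0_integralZl_EFin //.
    * by rewrite int_ind IH -EFinM -EFinD.
    * by move=> x _; rewrite lee_fin spike_ge0.
    * by apply/measurable_EFinP; apply: measurable_funTS; exact: mspike.
  + by move=> x _; rewrite lee_fin; case/andP: (ind01 (p - rad m L.+1) (p + rad m L.+1) x).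
  + by apply/measurable_EFinP; apply: measurable_funTS; exact: mind.
  + by move=> x _; rewrite -EFinM lee_fin mulr_ge0 // spike_ge0.
  + apply/measurable_EFinP; apply: measurable_funTS.
    by apply: measurable_funM => //; exact: mspike.
Qed.

Lemma radS m L : rad m L.+1 = 2 * rad m L.
Proof. by rewrite /rad exprS mulrCA. Qed.
Lemma rad0 m : rad m 0 = m.
Proof. by rewrite /rad expr0 mulr1. Qed.
Lemma rad_gt0 m L : 0 < m -> 0 < rad m L.
Proof. by move=> m0; rewrite /rad mulr_gt0 // exprn_gt0. Qed.
Lemma rad_ge m L : 0 < m -> m <= rad m L.
Proof.
move=> m0; elim: L => [|L IH]; first by rewrite rad0.
by rewrite radS; have := rad_gt0 m L m0; lra.
Qed.

Lemma spike_out p m D L x : 0 < m ->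
  (x < p - rad m L \/ p + rad m L < x) -> spike p m D L x = 0.
Proof.
move=> m0; elim: L => [|L IH] /= h.
- by rewrite ind_out ?mulr0.
- have := rad_gt0 m L m0; rewrite radS in h * => r0.
  rewrite ind_out; last by case: h => ?; lra.
  by rewrite IH ?mulr0 ?addr0 //; case: h => ?; lra.
Qed.

Lemma spike_core p m D L x : 0 < m -> p - m <= x -> x <= p + m ->
  spike p m D L x = 2 ^+ L * D - 1.
Proof.
move=> m0 h1 h2; elim: L => [|L IH] /=.
- by rewrite ind_in ?rad0 // expr0 mul1r mulr1.
- have := rad_ge m L.+1 m0 => r.
  by rewrite ind_in ?IH ?exprS; [ring| lra| lra].
Qed.

Lemma Fsp_ge0 a b p m D L : 1 <= D -> 0 <= Fsp a b p m D L.
Proof.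
move=> D1; elim: L => [|L IH] /=.
- by apply: mulr_ge0; [lra| exact: len_ge0].
- have := len_ge0 a b (p - rad m L.+1) (p + rad m L.+1); lra.
Qed.

Lemma Fsp_le a b p m D L : 0 < m -> 1 <= D ->
  Fsp a b p m D L <= 2 * rad m L * (L%:R + D).
Proof.
move=> m0 D1; elim: L => [|L IH] /=.
- rewrite rad0 add0r.
  have h := len_le2 a b (p - m) (p + m).
  have : len a b (p - m) (p + m) <= 2 * m by apply: le_trans (h _) _; lra.
  move=> h2; have := len_ge0 a b (p - m) (p + m) => h3; nra.
- have h := len_le2 a b (p - rad m L.+1) (p + rad m L.+1).
  have := rad_gt0 m L.+1 m0 => r0.
  have : len a b (p - rad m L.+1) (p + rad m L.+1) <= 2 * rad m L.+1.
    by apply: le_trans (h _) _; lra.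
  rewrite radS in IH * => h2.
  rewrite -[L.+1]addn1 natrD.
  have -> : 2 * (2 * rad m L) * (L%:R + 1 + D) =
    2 * (2 * rad m L * (L%:R + D)) + 4 * rad m L by ring.
  have := rad_gt0 m L m0; lra.
Qed.

Lemma Fsp_zero a b p m D L : 0 < m ->
  len a b (p - rad m L) (p + rad m L) = 0 -> Fsp a b p m D L = 0.
Proof.
move=> m0; elim: L => [|L IH] /=.
- by move=> ->; rewrite mulr0.
- move=> h; rewrite h IH ?mulr0 ?addr0 //.
  apply/eqP; rewrite eq_le len_ge0 andbT -h.
  by apply: len_mono; rewrite radS; have := rad_gt0 m L m0; lra.
Qed.

Lemma spike_main p m D K a b L : 0 < m -> 1 <= D -> 4 * (L%:R + D) <= K -> a <= b ->
  exists v, [/\ 1 <= v,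
    (forall x, a <= x -> x <= b -> v <= 1 + spike p m D L x),
    Fsp a b p m D L <= (v - 1) * (b - a) + K * v * len a b (p - rad m L) (p + rad m L)
    & (v = 1 \/ (p - rad m L <= a /\ b <= p + rad m L))].
Proof.
move=> m0 D1 + ab; elim: L => [|L IH] /= hK.
- rewrite add0r in hK.
  have l0 := len_ge0 a b (p - rad m 0) (p + rad m 0).
  have [/andP[h1 h2]|h] := boolP ((p - rad m 0 <= a) && (b <= p + rad m 0)).
  + exists D; split => //.
    * by move=> x xa xb; rewrite ind_in; [lra|lra|lra].
    * rewrite len_in //.
      have : 0 <= K * D * (b - a) by apply: mulr_ge0; [apply: mulr_ge0|]; lra.
      lra.
    * by right.
  + exists 1; split => //.
    * by move=> x _ _; have := spike_ge0 p m D 0 x D1; rewrite /=; lra.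
    * rewrite subrr mul0r add0r mulr1.
      by apply: ler_wpM2r => //; lra.
    * by left.
- have hK' : 4 * (L%:R + D) <= K by move: hK; rewrite -[L.+1]addn1 natrD; lra.
  have [v' [v1 pv Fv _]] := IH hK'.
  have r0 := rad_gt0 m L m0.
  have rS := radS m L.
  have l0 := len_ge0 a b (p - rad m L.+1) (p + rad m L.+1).
  have l1 := len_ge0 a b (p - rad m L) (p + rad m L).
  have K0 : 0 <= K by have := ler0n R L.+1; lra.
  have [/andP[h1 h2]|h] := boolP ((p - rad m L.+1 <= a) && (b <= p + rad m L.+1)).
  + exists (2 * v'); split.
    * lra.
    * move=> x xa xb; rewrite ind_in; try lra.
      by have := pv x xa xb; lra.
    * rewrite len_in //.
      have : len a b (p - rad m L) (p + rad m L) <= b - a by apply: len_le.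
      move=> hl.
      have : K * v' * len a b (p - rad m L) (p + rad m L) <= K * v' * (b - a).
        by apply: ler_wpM2l => //; apply: mulr_ge0; lra.
      move=> hh.
      have -> : (2 * v' - 1) * (b - a) + K * (2 * v') * (b - a) =
        (b - a) + 2 * ((v' - 1) * (b - a) + K * v' * (b - a)) by ring.
      lra.
    * by right.
  + exists 1; split => //.
    * move=> x _ _; have := spike_ge0 p m D L.+1 x D1; rewrite /=; lra.
    * rewrite subrr mul0r add0r mulr1.
      have [z|nz] := eqVneq (len a b (p - rad m L) (p + rad m L)) 0.
      - rewrite Fsp_zero // mulr0 addr0.
        have : 1 <= K by have := ler0n R L.+1; lra.
        move=> K1; have := ler_wpM2r l0 K1; rewrite mul1r; lra.
      - have lpos : 0 < len a b (p - rad m L) (p + rad m L) by rewrite lt_neqAle eq_sym nz l1.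
        have hd : rad m L <= len a b (p - rad m L.+1) (p + rad m L.+1).
          apply: (len_out _ _ _ _ _ _ _ _ _ _ _ _ _ lpos); try lra.
        have hF := Fsp_le a b p m D L m0 D1.
        have hF2 : 2 * rad m L * (L%:R + D) <=
                   2 * len a b (p - rad m L.+1) (p + rad m L.+1) * (L%:R + D).
          apply: ler_wpM2r; first by have := ler0n R L; lra.
          lra.
        set l := len a b (p - rad m L.+1) (p + rad m L.+1) in l0 hd hF2 *.
        have : (1 + 4 * (L%:R + D)) * l <= K * l.
          apply: ler_wpM2r => //; move: hK; rewrite -[L.+1]addn1 natrD; lra.
        lra.
    * by left.
Qed.

Lemma pos_copy (x : R) : 0 < x -> 0 < x. Proof. by []. Qed.
Lemma ge1_copy (x : R) : 1 <= x -> 1 <= x. Proof. by []. Qed.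

Lemma K0_lem (D K : R) n : 1 <= D -> 4 * (n%:R + D) <= K -> 0 <= K.
Proof. by move=> h1 h2; have := ler0n R n; lra. Qed.

Lemma essinf_ge (I : set R) (f : R -> R) v : (forall x, I x -> v <= f x) ->
  (v%:E <= essinf_on I (EFin \o f))%E.
Proof.
move=> h; apply: ereal_sup_ubound => /=; apply: aeW => x Ix; rewrite lee_fin; exact: h.
Qed.

Lemma essinf_le (I : set R) (f : R -> R) lo hi c : lo < hi -> `]lo, hi[ `<=` I ->
  (forall x, lo < x -> x < hi -> f x = c) -> (essinf_on I (EFin \o f) <= c%:E)%E.
Proof.
move=> lohi sub fc; apply: ge_ereal_sup => y /= [A [mA A0 sA]].
rewrite leNgt; apply/negP => cy.
have : `]lo, hi[ `<=` A.
  move=> x xi; apply: sA => /= h.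
  have := h (sub _ xi); rewrite /= in xi; move: xi; rewrite in_itv /= => /andP[x1 x2].
  by rewrite fc // leNgt cy.
move=> s; have h := le_measure mu (mem_set (measurable_itv `]lo, hi[)) (mem_set mA) s.
have h0 : (mu A <= 0)%E by rewrite A0.
have hm : ((hi - lo)%:E <= mu `]lo, hi[)%E.
  by rewrite lebesgue_measure_itv /= lte_fin lohi -EFinD.
have := le_trans hm (le_trans h h0).
rewrite lee_fin; lra.
Qed.

Section Multi.
Variables (M D : R).
Hypotheses (M0 : 0 < M) (D1 : 1 <= D).

Definition Pc (k : nat) := 4 * rad M k.

Fixpoint S (n : nat) (x : R) : R :=
  match n with 0 => 0 | n'.+1 => S n' x + spike (Pc n'.+1) M D n'.+1 x end.

Fixpoint G (a b : R) (n : nat) : R :=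
  match n with 0 => 0 | n'.+1 => G a b n' + Fsp a b (Pc n'.+1) M D n'.+1 end.

Lemma SS n x : S n.+1 x = S n x + spike (Pc n.+1) M D n.+1 x.
Proof. by []. Qed.
Lemma GS a b n : G a b n.+1 = G a b n + Fsp a b (Pc n.+1) M D n.+1.
Proof. by []. Qed.
Lemma S0 x : S 0 x = 0. Proof. by []. Qed.
Lemma G0 a b : G a b 0 = 0. Proof. by []. Qed.

Lemma S_ge0 n x : 0 <= S n x.
Proof. by elim: n => [|n IH]; rewrite ?S0 ?SS //; have := spike_ge0 (Pc n.+1) M D n.+1 x D1; lra. Qed.

Lemma G_ge0 a b n : 0 <= G a b n.
Proof. by elim: n => [|n IH]; rewrite ?G0 ?GS //; have := Fsp_ge0 a b (Pc n.+1) M D n.+1 D1; lra. Qed.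

Lemma mS n : measurable_fun setT (S n).
Proof.
elim: n => [|n IH]; first exact: measurable_cst.
by apply: (measurable_funD IH); exact: mspike.
Qed.

Lemma int_S a b n :
  (\int[mu]_(x in `[a,b]) (S n x)%:E = (G a b n)%:E)%E.
Proof.
elim: n => [|n IH]; first by rewrite G0; under eq_integral do rewrite S0; rewrite integral0.
under eq_integral do rewrite SS EFinD.
rewrite ge0_integralD //.
- by rewrite IH int_spike // -EFinD GS.
- by move=> x _; rewrite lee_fin S_ge0.
- by apply/measurable_EFinP; apply: measurable_funTS; exact: mS.
- by move=> x _; rewrite lee_fin spike_ge0.
- by apply/measurable_EFinP; apply: measurable_funTS; exact: mspike.
Qed.

Lemma rad_mono k n : (k <= n)%N -> rad M k <= rad M n.
Proof.
elim: n => [|n IH]; first by rewrite leqn0 => /eqP ->.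
rewrite leq_eqVlt => /orP[/eqP -> //| ]; rewrite ltnS => /IH h.
by rewrite radS; have := rad_gt0 M n M0; lra.
Qed.

Lemma S_above n x : 5 * rad M n < x -> S n x = 0.
Proof.
elim: n => [|n IH] // h; rewrite SS.
have r0 := rad_gt0 M n M0; have rS := radS M n.
rewrite IH; last lra.
rewrite spike_out ?addr0 //; rewrite /Pc; right; lra.
Qed.

Lemma multi_main K a b n : 4 * (n%:R + D) <= K -> a <= b ->
  exists v, [/\ 1 <= v,
    (forall x, a <= x -> x <= b -> v <= 1 + S n x) &
    G a b n <= (v - 1) * (b - a) + K * v * len a b 0 (5 * rad M n)].
Proof.
move=> + ab; elim: n => [|n IH] hK.
- exists 1; rewrite G0; split => //; first by move=> x _ _; rewrite S0; lra.
  rewrite subrr mul0r add0r mulr1.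
  have K0 : 0 <= K by exact: K0_lem D1 hK.
  by apply: mulr_ge0 => //; exact: len_ge0.
have hK' : 4 * (n%:R + D) <= K by move: hK; rewrite -[n.+1]addn1 natrD; lra.
have [v [v1 pv Gv]] := IH hK'.
rewrite GS.
have [v2 [v21 pv2 Fv2 [e|[i1 i2]]]] := spike_main (Pc n.+1) M D K a b n.+1 M0 D1 hK ab.
- subst v2; exists v; split => //.
  + by move=> x xa xb; rewrite SS; have := pv x xa xb; have := spike_ge0 (Pc n.+1) M D n.+1 x D1; lra.
  + have r0 := rad_gt0 M n M0; have rS := radS M n.
    have hd := len_disj a b 0 (5 * rad M n) (Pc n.+1 - rad M n.+1) (Pc n.+1 + rad M n.+1) ab.
    rewrite /Pc in hd Fv2 *.
    have hd' : len a b 0 (5 * rad M n) + len a b (4 * rad M n.+1 - rad M n.+1) (4 * rad M n.+1 + rad M n.+1)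
      <= len a b 0 (5 * rad M n.+1).
      apply: le_trans (hd _ _ _) _; try lra.
      by apply: len_mono; lra.
    set l1 := len a b 0 (5 * rad M n) in Gv hd' *.
    set l2 := len a b _ _ in Fv2 hd'.
    set l3 := len a b 0 (5 * rad M n.+1) in hd' *.
    have l20 : 0 <= l2 by exact: len_ge0.
    have K0 : 0 <= K by exact: K0_lem D1 hK.
    have h1 : K * l2 <= K * v * l2.
      by rewrite -mulrA; apply: ler_wpM2l => //; rewrite -[X in X <= _]mul1r; apply: ler_wpM2r.
    have h2 : K * v * (l1 + l2) <= K * v * l3 by apply: ler_wpM2l => //; apply: mulr_ge0; lra.
    rewrite subrr mul0r add0r mulr1 in Fv2.
    have : K * v * (l1 + l2) = K * v * l1 + K * v * l2 by ring.
    lra.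
- exists v2; split => //.
  + by move=> x xa xb; rewrite SS; have := pv2 x xa xb; have := S_ge0 n x; lra.
  + have r0 := rad_gt0 M n M0; have rS := radS M n.
    rewrite /Pc in i1 i2 Fv2 *.
    have S0 : S n a = 0 by apply: S_above; lra.
    have vv : v = 1 by have := pv a (lexx a) ab; rewrite S0; lra.
    rewrite vv subrr mul0r add0r mulr1 len_out0 ?mulr0 in Gv; last by right; lra.
    have K0 : 0 <= K by exact: K0_lem D1 hK.
    have : K * v2 * len a b (4 * rad M n.+1 - rad M n.+1) (4 * rad M n.+1 + rad M n.+1)
       <= K * v2 * len a b 0 (5 * rad M n.+1).
      apply: ler_wpM2l; first by apply: mulr_ge0; lra.
      by apply: len_mono; lra.
    lra.
Qed.

Definition wf n x := 1 + S n x.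

Lemma mw n : measurable_fun setT (wf n).
Proof. by apply: measurable_funD; [exact: measurable_cst| exact: mS]. Qed.

Lemma int_w n a b : a <= b ->
  (\int[mu]_(x in `[a,b]) (wf n x)%:E = (b - a + G a b n)%:E)%E.
Proof.
move=> ab; rewrite /wf.
under eq_integral do rewrite EFinD.
rewrite ge0_integralD //.
- rewrite int_S integral_cst //= mul1e lebesgue_measure_itv /= lte_fin.
  case: ltP => h; first by rewrite -!EFinD.
  have -> : b = a by apply/eqP; rewrite eq_le ab h.
  by rewrite subrr add0e add0r.
- by move=> x _; rewrite lee_fin S_ge0.
- by apply/measurable_EFinP; apply: measurable_funTS; exact: mS.
Qed.

Lemma A1_w n : A1_cond (wf n) (1 + 4 * (n%:R + D)).
Proof.
move=> a b ab; rewrite /avg_on int_w ?(ltW ab) //.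
have K0 : 0 <= 4 * (n%:R + D) by apply: K0_lem D1 (lexx _).
have [v [v1 pv Gv]] := multi_main (4 * (n%:R + D)) a b n (lexx _) (ltW ab).
have ev : (v%:E <= essinf_on `[a, b] (EFin \o wf n))%E.
  by apply: essinf_ge => x; rewrite /= in_itv /= => /andP[? ?]; exact: pv.
apply: le_trans (lee_wpmul2l _ ev); last by rewrite lee_fin; lra.
rewrite -!EFinM lee_fin ler_pdivrMl ?subr_gt0 //.
have hl : len a b 0 (5 * rad M n) <= b - a by apply: len_le; exact: ltW.
have : 4 * (n%:R + D) * v * len a b 0 (5 * rad M n) <= 4 * (n%:R + D) * v * (b - a).
  by apply: ler_wpM2l => //; apply: mulr_ge0 => //; lra.
have -> : (b - a) * ((1 + 4 * (n%:R + D)) * v) =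
  v * (b - a) + 4 * (n%:R + D) * v * (b - a) by ring.
have : (v - 1) * (b - a) = v * (b - a) - (b - a) by ring.
lra.
Qed.

Lemma G_mono a b n : (1 <= n)%N -> G a b 1 <= G a b n.
Proof.
elim: n => [//|n IH]; rewrite leq_eqVlt => /orP[/eqP <- //|]; rewrite ltnS => /IH h.
by rewrite GS; apply: (le_trans h); rewrite lerDl; exact: Fsp_ge0.
Qed.

Lemma S_low n x : (1 <= n)%N -> x < 12 * M -> S n x = spike (Pc 1) M D 1 x.
Proof.
move=> + xl; elim: n => [//|n IH]; rewrite leq_eqVlt => /orP[/eqP <-|].
  by rewrite SS S0 add0r.
rewrite ltnS => /[dup] n1 /IH h; rewrite SS (spike_out (Pc n.+1) M D n.+1 x M0) ?addr0; first exact: h.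
left; rewrite /Pc.
have : rad M 2 <= rad M n.+1 by apply: rad_mono; rewrite ltnS.
by rewrite !radS rad0; lra.
Qed.

Lemma G_small a b n : b <= 6 * M -> G a b n = 0.
Proof.
move=> bl; elim: n => [//|n IH]; rewrite GS IH add0r Fsp_zero //.
apply: len_out0; left; rewrite /Pc.
have : rad M 1 <= rad M n.+1 by apply: rad_mono.
by rewrite radS rad0; lra.
Qed.

Lemma lower_bound n C : (1 <= n)%N -> A1_cond (wf n) C -> D + 1 <= 2 * C.
Proof.
move=> n1 hC.
have M0' := pos_copy _ M0; have D1' := ge1_copy _ D1.
have r1 : rad M 1 = 2 * M by rewrite radS rad0.
have ab : 8 * M < 10 * M by lra.
have := hC _ _ ab; rewrite /avg_on int_w ?(ltW ab) //.
have hG : 2 * M + 2 * ((D - 1) * M) <= G (8 * M) (10 * M) n.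
  apply: le_trans _ (G_mono _ _ _ n1); rewrite GS G0 add0r /= /Pc r1 rad0.
  rewrite len_in; [|lra|lra|lra]; rewrite (@len_right (8 * M)); [|lra|lra|lra].
  have h8 : 4 * (2 * M) + M - 8 * M = M by ring.
  rewrite h8; lra.
have e2 : (essinf_on `[(8 * M)%R, (10 * M)%R] (EFin \o wf n) <= 2%:E)%E.
  apply: (@essinf_le _ _ (9 * M) (10 * M)); first lra.
  - by move=> x; rewrite /= !in_itv /= => /andP[? ?]; apply/andP; split; lra.
  - move=> x x1 x2; rewrite /wf S_low //; last lra.
    rewrite /= /Pc r1 rad0 ind_in; [|lra|lra].
    rewrite ind_out; last by right; lra.
    rewrite !mulr0 addr0; lra.
have e1 : (1%:E <= essinf_on `[(8 * M)%R, (10 * M)%R] (EFin \o wf n))%E.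
  by apply: essinf_ge => x _; rewrite /wf; have := S_ge0 n x; lra.
set e := essinf_on _ _ in e1 e2 *.
have ef : e = (fine e)%:E.
  by rewrite fineK // fin_numE; apply/andP; split; apply/negP => /eqP h;
     [move: e1; rewrite h | move: e2; rewrite h].
rewrite ef -!EFinM lee_fin in e1 e2 * => h.
rewrite ef lee_fin in e1 e2.
have hL : D + 1 <= (10 * M - 8 * M)^-1 * (10 * M - 8 * M + G (8 * M) (10 * M) n).
  rewrite ler_pdivlMl; last lra.
  have : (10 * M - 8 * M) * (D + 1) = 2 * M + 2 * M + 2 * ((D - 1) * M) by ring.
  lra.
have := le_trans hL h.
have [C0|C0] := lerP C 0.
- have : C * fine e <= 0 by apply: mulr_le0_ge0 => //; lra.
  lra.
- have : C * fine e <= C * 2 by apply: ler_wpM2l; lra.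
  lra.
Qed.

Definition core k : set R := `[Pc k - M, Pc k + M].

Fixpoint U n : set R := match n with 0 => set0 | n'.+1 => U n' `|` core n'.+1 end.

Lemma mU n : measurable (U n).
Proof. by elim: n => [|n IH] /=; [exact: measurable0| apply: measurableU => //; exact: measurable_itv]. Qed.

Lemma U_sub n x : U n x -> x <= 5 * rad M n.
Proof.
have M0' := pos_copy _ M0.
elim: n => [//|n IH] /= [/IH h|].
- by have := rad_mono n n.+1 (leqnSn n); lra.
- rewrite /core /Pc /= in_itv /= => /andP[_ h].
  by have := rad_ge M n.+1 M0; lra.
Qed.

Lemma muU n : mu (U n) = (2 * M * n%:R)%:E.
Proof.
have M0' := pos_copy _ M0.
elim: n => [|n IH] /=; first by rewrite measure0 mulr0.
rewrite measureU //; [| exact: mU | exact: measurable_itv |].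
- have hc : mu (core n.+1) = (2 * M)%:E.
    rewrite /core lebesgue_measure_itv /= lte_fin.
    have -> : (Pc n.+1 - M < Pc n.+1 + M) = true by apply/idP; lra.
    by rewrite -!EFinD; congr (_%:E); ring.
  apply: eq_trans (f_equal2 (fun a b => (a + b)%E) IH hc) _.
  by rewrite -!EFinD -[n.+1]addn1 natrD; congr (_%:E); ring.
- apply/seteqP; split => x //= [/U_sub h].
  rewrite /core /Pc /= in_itv /= => /andP[h1 _].
  have := rad_ge M n M0; have := radS M n; lra.
Qed.

Lemma S_ge_spike n k x : (1 <= k <= n)%N -> spike (Pc k) M D k x <= S n x.
Proof.
elim: n => [|n IH]; first by case/andP=> h1 h2; move: (leq_trans h1 h2).
case/andP => k1; rewrite leq_eqVlt => /orP[/eqP ->|].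
  by rewrite SS lerDr S_ge0.
rewrite ltnS => kn; rewrite SS; apply: le_trans (IH _) _; first by rewrite k1.
by rewrite lerDl spike_ge0.
Qed.

Lemma U_E NN (hD : D = 5 * M) (M1 : 1 <= M) n : (n <= NN)%N ->
  U n `<=` [set x | 1 < x /\ x < wf NN x].
Proof.
have M0' := pos_copy _ M0; have M1' := ge1_copy _ M1.
elim: n => [//|n IH] nN x /= [/IH|]; first by apply; exact: ltnW.
rewrite /core /Pc /= in_itv /= => /andP[h1 h2].
have r2 : 2 * M <= rad M n.+1.
  by have := rad_mono 1 n.+1 (ltn0Sn n); rewrite radS rad0.
split; first lra.
have hs := S_ge_spike NN n.+1 x (ltac:(by rewrite nN)).
rewrite spike_core // in hs.
rewrite /wf; apply: lt_le_trans (_ : x < 1 + (2 ^+ n.+1 * D - 1)) _; last by lra.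
rewrite hD (_ : 1 + (2 ^+ n.+1 * (5 * M) - 1) = 5 * rad M n.+1); last by rewrite /rad; ring.
lra.
Qed.

Lemma mE NN : measurable [set x | 1 < x /\ x < wf NN x].
Proof.
have -> : [set x | 1 < x /\ x < wf NN x] =
  `]1, +oo[ `&` (setT `&` (fun x => wf NN x - x) @^-1` `]0, +oo[).
  apply/seteqP; split => x /=; rewrite !in_itv /= !andbT.
  - by case=> h1 h2; split => //; split => //; rewrite subr_gt0.
  - by case=> h1 [_]; rewrite subr_gt0.
apply: measurableI; first exact: measurable_itv.
apply: (measurable_funB (mw NN) (@measurable_id _ _ setT)) => //.
Qed.
End Multi.
End S.

Theorem theorem2p2 (R : realType) :
  exists c1 c2 c3 : R, 0 < c1 /\ c1 <= c2 /\ 0 < c3 /\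
  forall N : nat, (20 < N)%N ->
  exists w : R -> R, in_A1 w /\
    (\int[@lebesgue_measure R]_(x in `[0%R, 1%R]) (w x)%:E = 1)%E /\
    ((c1 * N%:R)%:E <= A1_const w)%E /\ (A1_const w <= (c2 * N%:R)%:E)%E /\
    ((c3 * (N%:R) ^+ 2)%:E <= @lebesgue_measure R [set x : R | (1 < x)%R /\ (x < w x)%R])%E.
Proof.
exists 2, 25, 2; split; first lra; split; first lra; split; first lra.
move=> N N20.
pose M : R := N%:R.
have M1 : 1 <= M by rewrite /M ler1n; exact: ltnW (leq_trans _ N20).
have M0 : 0 < M by lra.
pose D : R := 5 * M.
have D1 : 1 <= D by rewrite /D; lra.
have N1 : (1 <= N)%N by exact: ltnW (leq_trans _ N20).
exists (wf R M D N).
have w1 : forall x, 1 <= wf R M D N x.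
  by move=> x; rewrite /wf; have := S_ge0 R M D D1 N x; lra.
split; [split; [split; [|split]|] |split; [|split; [|split]]].
- by move=> x; have := w1 x; lra.
- exact: mw.
- move=> a b.
  apply/integrableP; split.
    by apply/measurable_EFinP; apply: measurable_funTS; exact: mw.
  have -> : (\int[@lebesgue_measure R]_(x in `[a, b]) `|(EFin \o wf R M D N) x|
     = \int[@lebesgue_measure R]_(x in `[a, b]) (wf R M D N x)%:E)%E.
    by apply: eq_integral => x _; rewrite /= ger0_norm //; have := w1 x; lra.
  case: (leP a b) => ab; first by rewrite int_w // ltry.
  rewrite set_itv_ge ?integral_set0 //.
  by rewrite bnd_simp -ltNge.
- exists (1 + 4 * (N%:R + D)); split; last exact: A1_w.
  by have := ler0n R N; lra.
- rewrite int_w ?ler01 // G_small //; last lra.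
  by rewrite subr0 addr0.
- apply: le_ereal_inf_tmp => y /= [C hC <-]; rewrite lee_fin.
  have := lower_bound R M D M0 D1 N C N1 hC; rewrite /D /M; lra.
- apply: (@le_trans _ _ ((1 + 4 * (N%:R + D))%:E)).
    by apply: ereal_inf_lbound; exists (1 + 4 * (N%:R + D)) => //; exact: A1_w.
  by rewrite lee_fin /D -/M; lra.
- have sub := U_E R M D M0 D1 N erefl M1 N (leqnn N).
  have h := le_measure (@lebesgue_measure R) (mem_set (mU R M N)) (mem_set (mE R M D N)) sub.
  apply: le_trans h.
  have hU := muU R M M0 N.
  apply: (@le_trans _ _ ((2 * M * N%:R)%:E)); first by rewrite lee_fin /M expr2; lra.
  by rewrite le_eqVlt; apply/orP; left; apply/eqP; symmetry; exact: hU.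
Qed.
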